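(* Let $\Gamma_0$ be a nonempty finite set of formulas over $\Sigma^\circ$ closed under subformulas, and let $\nu_0:\Gamma_0\to\{T,t,F\}$ satisfy: (1) if $\#\beta\in\Gamma_0$ for $\#\in\{\neg,\circ\}$, then $\nu_0(\#\beta)\in\tilde\#\nu_0(\beta)$; (2) if $\varphi\#\psi\in\Gamma_0$ for $\#\in\{\wedge,\vee,\to\}$, then $\nu_0(\varphi\#\psi)\in\nu_0(\varphi)\tilde\#\nu_0(\psi)$; (3) if $\alpha\wedge\neg\alpha\in\Gamma_0$ and $\nu_0(\alpha)=t$, then $\nu_0(\alpha\wedge\neg\alpha)=T$. Then there exists $\nu\in\mathcal{F}_{\bf Cila}$ with $\nu(\alpha)=\nu_0(\alpha)$ for all $\alpha\in\Gamma_0$.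
   Context: $\Sigma^\circ$ has unary $\neg,\circ$ and binary $\wedge,\vee,\to$; formulas over a denumerable set of variables. $\mathcal{A}_{\bf Cila}$ is the $\Sigma^\circ$-multialgebra with universe $\{F,t,T\}$, $D=\{t,T\}$, and: $F\tilde\vee F=\{F\}$, $F\tilde\vee T=T\tilde\vee F=T\tilde\vee T=\{T\}$, $x\tilde\vee y=D$ whenever $t\in\{x,y\}$; $x\tilde\wedge y=\{F\}$ if $F\in\{x,y\}$, $T\tilde\wedge T=\{T\}$, $t\tilde\wedge t=t\tilde\wedge T=T\tilde\wedge t=D$; $\tilde\neg F=\{T\}$, $\tilde\neg t=D$, $\tilde\neg T=\{F\}$; $F\tilde\to F=F\tilde\to T=T\tilde\to T=\{T\}$, $t\tilde\to F=T\tilde\to F=\{F\}$, $x\tilde\to t=D$ for all $x$, $t\tilde\to T=D$; $\tilde\circ F=\tilde\circ T=\{T\}$, $\tilde\circ t=\{F\}$. A valuation is a map $\nu$ from all formulas to $\{F,t,T\}$ with $\nu(\#\alpha)\in\tilde\#\nu(\alpha)$ and $\nu(\alpha\#\beta)\in\nu(\alpha)\tilde\#\nu(\beta)$. $\mathcal{F}_{\bf Cila}$ is the set of valuations with $\nu(\alpha)=t\Rightarrow\nu(\alpha\wedge\neg\alpha)=T$ for every formula $\alpha$. *)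

(* Defs.v *)
From Stdlib Require Import List.
Import ListNotations.

Inductive formula : Type :=
| Var : nat -> formula
| Neg : formula -> formula
| Circ : formula -> formula
| And : formula -> formula -> formula
| Or : formula -> formula -> formula
| Imp : formula -> formula -> formula.

Inductive V3 : Type := vF | vt | vT.

(* Multioperations, as predicates: op x y z  means  z \in x ~op y. *)
Definition designated (z : V3) : Prop := z = vt \/ z = vT.

Definition tor (x y z : V3) : Prop :=
  match x, y with
  | vF, vF => z = vF
  | vt, _ | _, vt => designated z
  | _, _ => z = vT
  end.

Definition tand (x y z : V3) : Prop :=
  match x, y with
  | vF, _ | _, vF => z = vF
  | vT, vT => z = vT
  | _, _ => designated z
  end.

Definition tneg (x z : V3) : Prop :=
  match x with
  | vF => z = vT
  | vt => designated z
  | vT => z = vF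
  end.

Definition timp (x y z : V3) : Prop :=
  match x, y with
  | _, vt => designated z
  | vF, _ => z = vT
  | vT, vT => z = vT
  | _, vF => z = vF
  | vt, vT => designated z
  end.

Definition tcirc (x z : V3) : Prop :=
  match x with
  | vt => z = vF
  | _ => z = vT
  end.

Definition valuation (nu : formula -> V3) : Prop :=
  forall a b : formula,
    tneg (nu a) (nu (Neg a)) /\
    tcirc (nu a) (nu (Circ a)) /\
    tand (nu a) (nu b) (nu (And a b)) /\
    tor (nu a) (nu b) (nu (Or a b)) /\
    timp (nu a) (nu b) (nu (Imp a b)).

Definition in_F_Cila (nu : formula -> V3) : Prop :=
  valuation nu /\
  forall a : formula, nu a = vt -> nu (And a (Neg a)) = vT.

Definition subformula_closed (G : list formula) : Prop :=
  forall f, In f G ->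
    match f with
    | Var _ => True
    | Neg a | Circ a => In a G
    | And a b | Or a b | Imp a b => In a G /\ In b G
    end.

(* Main.v *)
Require Import Defs.
From Stdlib Require Import List Arith.

Definition fdec (x y : formula) : {x = y} + {x <> y}.
Proof. decide equality; apply Nat.eq_dec. Defined.

Definition negd (x : V3) := match x with vT => vF | _ => vT end.
Definition circd (x : V3) := match x with vt => vF | _ => vT end.
Definition andd (x y : V3) := match x, y with vF, _ | _, vF => vF | _, _ => vT end.
Definition ord (x y : V3) := match x, y with vF, vF => vF | _, _ => vT end.
Definition impd (x y : V3) := match x, y with
  | _, vt => vT | vF, _ => vT | _, vT => vT | _, vF => vF end.

Fixpoint ext (G : list formula) (nu0 : formula -> V3) (f : formula) : V3 :=
  if in_dec fdec f G then nu0 f else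
  match f with
  | Var _ => vF
  | Neg a => negd (ext G nu0 a)
  | Circ a => circd (ext G nu0 a)
  | And a b => andd (ext G nu0 a) (ext G nu0 b)
  | Or a b => ord (ext G nu0 a) (ext G nu0 b)
  | Imp a b => impd (ext G nu0 a) (ext G nu0 b)
  end.

Lemma ext_in G nu0 f : In f G -> ext G nu0 f = nu0 f.
Proof. intro H. destruct f; simpl; destruct (in_dec fdec _ G); tauto. Qed.

Theorem mainTheorem8 (G0 : list formula) (nu0 : formula -> V3) :
  G0 <> nil ->
  subformula_closed G0 ->
  (forall b, In (Neg b) G0 -> tneg (nu0 b) (nu0 (Neg b))) ->
  (forall b, In (Circ b) G0 -> tcirc (nu0 b) (nu0 (Circ b))) ->
  (forall p q, In (And p q) G0 -> tand (nu0 p) (nu0 q) (nu0 (And p q))) ->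
  (forall p q, In (Or p q) G0 -> tor (nu0 p) (nu0 q) (nu0 (Or p q))) ->
  (forall p q, In (Imp p q) G0 -> timp (nu0 p) (nu0 q) (nu0 (Imp p q))) ->
  (forall a, In (And a (Neg a)) G0 -> nu0 a = vt -> nu0 (And a (Neg a)) = vT) ->
  exists nu : formula -> V3,
    in_F_Cila nu /\ forall a, In a G0 -> nu a = nu0 a.
Proof.
  intros _ Hcl HN HC HA HO HI HK.
  assert (Hval : valuation (ext G0 nu0)).
  { intros a b. repeat split.
    - simpl. destruct (in_dec fdec (Neg a) G0) as [i|n].
      + pose proof (Hcl _ i) as Ha; simpl in Ha. rewrite (ext_in _ _ _ Ha). auto.
      + destruct (ext G0 nu0 a); simpl; unfold designated; auto.
    - simpl. destruct (in_dec fdec (Circ a) G0) as [i|n].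
      + pose proof (Hcl _ i) as Ha; simpl in Ha. rewrite (ext_in _ _ _ Ha). auto.
      + destruct (ext G0 nu0 a); simpl; auto.
    - simpl. destruct (in_dec fdec (And a b) G0) as [i|n].
      + pose proof (Hcl _ i) as [Ha Hb]. rewrite (ext_in _ _ _ Ha), (ext_in _ _ _ Hb). auto.
      + destruct (ext G0 nu0 a), (ext G0 nu0 b); simpl; unfold designated; auto.
    - simpl. destruct (in_dec fdec (Or a b) G0) as [i|n].
      + pose proof (Hcl _ i) as [Ha Hb]. rewrite (ext_in _ _ _ Ha), (ext_in _ _ _ Hb). auto.
      + destruct (ext G0 nu0 a), (ext G0 nu0 b); simpl; unfold designated; auto.
    - simpl. destruct (in_dec fdec (Imp a b) G0) as [i|n].
      + pose proof (Hcl _ i) as [Ha Hb]. rewrite (ext_in _ _ _ Ha), (ext_in _ _ _ Hb). auto.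
      + destruct (ext G0 nu0 a), (ext G0 nu0 b); simpl; unfold designated; auto. }
  exists (ext G0 nu0). split; [split|].
  - exact Hval.
  - intros a Ht.
    destruct (in_dec fdec (And a (Neg a)) G0) as [i|n].
    + pose proof (Hcl _ i) as [Ha Hb]. rewrite (ext_in _ _ _ i). apply HK; auto.
      rewrite <- (ext_in _ _ _ Ha). exact Ht.
    + destruct (Hval a a) as [Hn _]. rewrite Ht in Hn.
      change (ext G0 nu0 (And a (Neg a))) with
        (if in_dec fdec (And a (Neg a)) G0 then nu0 (And a (Neg a))
         else andd (ext G0 nu0 a) (ext G0 nu0 (Neg a))).
      destruct (in_dec fdec (And a (Neg a)) G0) as [i|_]; [contradiction|].
      rewrite Ht. revert Hn. generalize (ext G0 nu0 (Neg a)).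
      intros v Hn; destruct v; simpl; auto.
      unfold designated in Hn; simpl in Hn; destruct Hn as [e|e]; discriminate.
  - intros; apply ext_in; auto.
Qed.
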